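(* Let $f_1,\dots,f_n:\mathbb{R}^d\to\mathbb{R}$ be such that each $f_i$ is $L_i$-smooth and has a minimizer $x_i$, let $\alpha_1,\dots,\alpha_n\in(0,1)$ and $\tilde f(x) = \frac{1}{n}\sum_{i=1}^n f_i(\alpha_i x + (1-\alpha_i)x_i)$. Let $x^\alpha$ be a minimizer of $\tilde f$ and $L_\alpha = \frac{1}{n}\sum_i\alpha_i^2 L_i$. Then for every $x\in\mathbb{R}^d$, \[ \|\nabla\tilde f(x)\| \leq L_\alpha\|x - x^\alpha\| \quad\text{and}\quad \tilde f(x) - \tilde f(x^\alpha) \leq \frac{L_\alpha}{2}\|x - x^\alpha\|^2. \]
   Context: A differentiable $g$ is $L$-smooth if $\|\nabla g(x)-\nabla g(y)\|\leq L\|x-y\|$ for all $x,y$. *)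

(* Defs.v *)
(* R^d is 'rV[R]_d with the Euclidean norm. *)
From HB Require Import structures.
From mathcomp Require Import all_boot all_order all_algebra.
From mathcomp Require Import all_classical all_reals all_analysis.
Set Implicit Arguments. Unset Strict Implicit. Unset Printing Implicit Defensive.
Import Order.TTheory GRing.Theory Num.Theory.
Import numFieldNormedType.Exports.
Local Open Scope ring_scope.

Definition enorm {R : realType} {d : nat} (v : 'rV[R]_d) : R :=
  Num.sqrt (\sum_(i < d) v ord0 i ^+ 2).

Definition grad {R : realType} {d : nat} (g : 'rV[R]_d -> R) (x : 'rV[R]_d)
  : 'rV[R]_d := \row_(i < d) derive g x (delta_mx 0 i).

Definition Lsmooth {R : realType} {d : nat} (L : R) (g : 'rV[R]_d -> R) : Prop :=
  (forall x, differentiable g x) /\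
  (forall x y, enorm (grad g x - grad g y) <= L * enorm (x - y)).

Definition is_minimizer {R : realType} {d : nat} (g : 'rV[R]_d -> R)
  (x : 'rV[R]_d) : Prop := forall y, g x <= g y.

Definition ftilde {R : realType} {d n : nat} (f : 'I_n -> 'rV[R]_d -> R)
  (alpha : 'I_n -> R) (xs : 'I_n -> 'rV[R]_d) (x : 'rV[R]_d) : R :=
  n%:R^-1 * \sum_(i < n) f i (alpha i *: x + (1 - alpha i) *: xs i).

Definition Lalpha {R : realType} {n : nat} (alpha : 'I_n -> R) (L : 'I_n -> R) : R :=
  n%:R^-1 * \sum_(i < n) alpha i ^+ 2 * L i.

(* Main.v *)
Require Import Defs.
From HB Require Import structures.
From mathcomp Require Import all_boot all_order all_algebra.
From mathcomp Require Import all_classical all_reals all_analysis.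
From mathcomp Require Import ring lra.
Import Order.TTheory GRing.Theory Num.Theory.
Import numFieldNormedType.Exports.
Local Open Scope ring_scope.
Set Implicit Arguments. Unset Strict Implicit.
Local Open Scope classical_set_scope.
Local Open Scope ring_scope.

Section E.
Variables (R : realType) (d : nat).
Implicit Types u v : 'rV[R]_d.

Definition dotp u v := \sum_(j < d) u ord0 j * v ord0 j.

Lemma sum_prod2 (F G : 'I_d -> R) :
  \sum_i \sum_j F i * G j = (\sum_i F i) * (\sum_j G j).
Proof. by rewrite mulr_suml; apply: eq_bigr => i _; rewrite mulr_sumr. Qed.

Lemma lagrange u v :
  \sum_i \sum_j (u ord0 i * v ord0 j - u ord0 j * v ord0 i) ^+ 2 =
  2 * ((\sum_j u ord0 j ^+ 2) * (\sum_j v ord0 j ^+ 2) - dotp u v ^+ 2).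
Proof.
have E i j : (u ord0 i * v ord0 j - u ord0 j * v ord0 i) ^+ 2 =
   u ord0 i ^+ 2 * v ord0 j ^+ 2 + v ord0 i ^+ 2 * u ord0 j ^+ 2
   - 2 * ((u ord0 i * v ord0 i) * (u ord0 j * v ord0 j)) by ring.
under eq_bigr => i _ do under eq_bigr => j _ do rewrite E.
under eq_bigr => i _ do rewrite sumrB big_split /=.
rewrite sumrB big_split /=.
have S (F G : 'I_d -> R) : \sum_i \sum_j 2 * (F i * G j) = 2 * ((\sum_i F i) * (\sum_j G j)).
  by rewrite -sum_prod2 mulr_sumr; apply: eq_bigr => i _; rewrite mulr_sumr.
rewrite S !sum_prod2 /dotp expr2; ring.
Qed.

Lemma CS u v : dotp u v ^+ 2 <= (\sum_j u ord0 j ^+ 2) * (\sum_j v ord0 j ^+ 2).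
Proof.
rewrite -subr_ge0.
have : 0 <= \sum_i \sum_j (u ord0 i * v ord0 j - u ord0 j * v ord0 i) ^+ 2.
  by apply: sumr_ge0 => i _; apply: sumr_ge0 => j _; apply: sqr_ge0.
rewrite lagrange; lra.
Qed.

Lemma sumsq_ge0 u : 0 <= \sum_j u ord0 j ^+ 2.
Proof. by apply: sumr_ge0 => j _; apply: sqr_ge0. Qed.

Lemma enorm_ge0 u : 0 <= enorm u.
Proof. exact: sqrtr_ge0. Qed.

Lemma enorm_sqr u : enorm u ^+ 2 = \sum_j u ord0 j ^+ 2.
Proof. by rewrite /enorm sqr_sqrtr // sumsq_ge0. Qed.

Lemma CSn u v : `|dotp u v| <= enorm u * enorm v.
Proof.
rewrite /enorm -sqrtrM ?sumsq_ge0 // -sqrtr_sqr ler_sqrt; last first.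
  by apply: mulr_ge0; apply: sumsq_ge0.
exact: CS.
Qed.

Lemma dotp_le u v : dotp u v <= enorm u * enorm v.
Proof. exact: le_trans (ler_norm _) (CSn u v). Qed.

Lemma enormD u v : enorm (u + v) <= enorm u + enorm v.
Proof.
rewrite -(ler_pXn2r (n := 2)) // ?nnegrE ?addr_ge0 ?enorm_ge0 //.
rewrite sqrrD !enorm_sqr.
have -> : \sum_j (u + v) ord0 j ^+ 2 =
   \sum_j u ord0 j ^+ 2 + 2 * dotp u v + \sum_j v ord0 j ^+ 2.
  rewrite /dotp mulr_sumr -!big_split /=; apply: eq_bigr => j _.
  rewrite !mxE; ring.
have := dotp_le u v; lra.
Qed.

Lemma enormZ a u : enorm (a *: u) = `|a| * enorm u.
Proof.
rewrite /enorm -sqrtr_sqr -sqrtrM ?sqr_ge0 // mulr_sumr.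
by congr Num.sqrt; apply: eq_bigr => j _; rewrite !mxE exprMn.
Qed.

Lemma enormN u : enorm (- u) = enorm u.
Proof. by rewrite -scaleN1r enormZ normrN normr1 mul1r. Qed.

Lemma enorm_sum n (F : 'I_n -> 'rV[R]_d) :
  enorm (\sum_(i < n) F i) <= \sum_(i < n) enorm (F i).
Proof.
elim/big_ind2: _ => //.
  by rewrite /enorm big1 ?sqrtr0 // => j _; rewrite mxE expr0n.
move=> x1 x2 y1 y2 h1 h2; apply: le_trans (enormD _ _) _; exact: lerD.
Qed.

End E.
Section D.
Variable (R : realType).

Lemma quot_transfer {U V : normedModType R} (p : U -> R) (g : V -> R) a u b w :
 (forall s : R, p (s *: u + a) = g (s *: w + b)) ->
 (fun h : R => h^-1 *: ((p \o shift a) (h *: u) - p a)) =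
 (fun h : R => h^-1 *: ((g \o shift b) (h *: w) - g b)).
Proof.
move=> H; apply/funext => h /=.
by have := H 0; rewrite !scale0r !add0r => ->; rewrite H.
Qed.

Lemma derive_transfer {U V : normedModType R} (p : U -> R) (g : V -> R) a u b w :
 (forall s : R, p (s *: u + a) = g (s *: w + b)) ->
 derive p a u = derive g b w /\ (derivable p a u <-> derivable g b w).
Proof. by move=> H; rewrite /derive /derivable (quot_transfer H). Qed.

Variable d : nat.

Lemma derive_grad (g : 'rV[R]_d -> R) z v : differentiable g z ->
  derive g z v = dotp (grad g z) v.
Proof.
move=> dg; rewrite deriveE // {1}(row_sum_delta v) linear_sum /dotp.
apply: eq_bigr => j _; rewrite linearZ /= mxE deriveE //.
by rewrite /GRing.scale /= mulrC.
Qed.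

Lemma deriveZv (g : 'rV[R]_d -> R) z a v : differentiable g z ->
  derive g z (a *: v) = a * derive g z v.
Proof. by move=> dg; rewrite !deriveE // linearZ. Qed.

End D.
Section M.
Variables (R : realType) (d n : nat)
  (f : 'I_n -> 'rV[R]_d -> R) (L : 'I_n -> R) (xs : 'I_n -> 'rV[R]_d)
  (alpha : 'I_n -> R)
  (hsmooth : forall i, Lsmooth (L i) (f i))
  (halpha : forall i, 0 < alpha i < 1).

Let b i (x : 'rV[R]_d) := alpha i *: x + (1 - alpha i) *: xs i.
Let phi i x := f i (b i x).
Let F := ftilde f alpha xs.

Lemma diff_b i x : differentiable (b i) x.
Proof.
have -> : b i = ( *:%R (alpha i)) + cst ((1 - alpha i) *: xs i) by [].
apply: differentiableD; last exact: differentiable_cst.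
exact: ex_diff.
Qed.

Lemma diff_phi i x : differentiable (phi i) x.
Proof.
have -> : phi i = f i \o b i by [].
apply: differentiable_comp; first exact: diff_b.
exact: (hsmooth i).1.
Qed.

Lemma F_eq : F = n%:R^-1 *: \sum_(i < n) phi i.
Proof.
apply/funext => x; rewrite /F /ftilde /=.
by rewrite fct_sumE.
Qed.

Lemma diff_F x : differentiable F x.
Proof.
rewrite F_eq; apply: differentiableZ; apply: differentiable_sum => i.
exact: diff_phi.
Qed.

Lemma derive_phi i x v : derive (phi i) x v = alpha i * derive (f i) (b i x) v.
Proof.
have H : forall s, phi i (s *: v + x) = f i (s *: (alpha i *: v) + b i x).
  by move=> s; rewrite /phi /b scalerDr !scalerA mulrC addrA.
have [-> _] := derive_transfer H.
by rewrite deriveZv //; exact: (hsmooth i).1.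
Qed.

Lemma derive_F x v :
  derive F x v = n%:R^-1 * \sum_(i < n) alpha i * derive (f i) (b i x) v.
Proof.
rewrite F_eq deriveZ; last by apply: diff_derivable; apply: differentiable_sum => i; exact: diff_phi.
rewrite derive_sum; last by move=> i; apply: diff_derivable; exact: diff_phi.
by congr (_ * _); apply: eq_bigr => i _; rewrite derive_phi.
Qed.

Lemma grad_F x : grad F x = n%:R^-1 *: \sum_(i < n) alpha i *: grad (f i) (b i x).
Proof.
apply/rowP => j; rewrite !mxE derive_F summxE; congr (_ * _).
by apply: eq_bigr => i _; rewrite !mxE.
Qed.

Lemma bB i x y : b i x - b i y = alpha i *: (x - y).
Proof. by rewrite /b opprD addrACA subrr addr0 -scalerBr. Qed.

Lemma grad_lip x y : enorm (grad F x - grad F y) <= Lalpha alpha L * enorm (x - y).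
Proof.
have -> : grad F x - grad F y = n%:R^-1 *: \sum_(i < n) alpha i *:
    (grad (f i) (b i x) - grad (f i) (b i y)).
  rewrite !grad_F -scalerBr -sumrB; congr (_ *: _).
  by apply: eq_bigr => i _; rewrite scalerBr.
rewrite enormZ ger0_norm ?invr_ge0 ?ler0n // /Lalpha -mulrA.
apply: ler_wpM2l; first by rewrite invr_ge0 ler0n.
apply: le_trans (enorm_sum _) _; rewrite mulr_suml; apply: ler_sum => i _.
have [a0 a1] := andP (halpha i).
rewrite enormZ (ger0_norm (ltW a0)).
have H := (hsmooth i).2 (b i x) (b i y).
rewrite bB enormZ (ger0_norm (ltW a0)) in H.
have -> : alpha i ^+ 2 * L i * enorm (x - y) = alpha i * (L i * (alpha i * enorm (x - y))) by ring.
by rewrite ler_pM2l.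
Qed.

Lemma grad_min xa : is_minimizer F xa -> grad F xa = 0.
Proof.
move=> hxa; apply/rowP => j; rewrite !mxE.
set e := delta_mx 0 j : 'rV[R]_d.
pose q := fun t : R => F (t *: e + xa).
have Ht t s : q (s *: 1 + t) = F (s *: e + (t *: e + xa)).
  by rewrite /q -[s *: (1:R)]/(s * 1) mulr1 scalerDl addrA.
have [H0 _] := derive_transfer (Ht 0).
rewrite scale0r add0r in H0; rewrite -H0.
have qd t : derivable q t 1.
  by apply/(derive_transfer (Ht t)).2; apply: diff_derivable; exact: diff_F.
have H : is_derive (0:R) 1 q 0.
  apply: (@derive1_at_min R q (-1) 1 0).
  - by lra.
  - by move=> t _; exact: qd.
  - by rewrite in_itv /=; apply/andP; split; lra.
  - by move=> t _; rewrite /q scale0r add0r; exact: hxa.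
by rewrite derive_val.
Qed.

Lemma part2 xa x : is_minimizer F xa ->
  F x - F xa <= Lalpha alpha L / 2 * enorm (x - xa) ^+ 2.
Proof.
move=> hxa.
set h := x - xa; set La := Lalpha alpha L; set K := La / 2 * enorm h ^+ 2.
pose p := fun t : R => F (t *: h + xa).
have Hp t s : p (s *: 1 + t) = F (s *: h + (t *: h + xa)).
  by rewrite /p -[s *: (1:R)]/(s * 1) mulr1 scalerDl addrA.
have dp (t : R) : is_derive t (1:R) p (dotp (grad F (t *: h + xa)) h).
  have [H1 H2] := derive_transfer (Hp t).
  apply: DeriveDef.
    by apply/H2; apply: diff_derivable; exact: diff_F.
  by rewrite H1 derive_grad //; exact: diff_F.
have dr (t : R) : is_derive t (1:R) (fun s : R => K * s ^+ 2) (K * (2 * t)).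
  have H1 := @is_deriveX R R id 2 t 1 1 (is_derive_id t 1).
  have H2 := @is_deriveZ R R R _ K t 1 _ H1.
  have -> : (fun s : R => K * s ^+ 2) = K \*: (id ^+ 2) by apply/funext => s.
  have E : K *: (2 * t ^+ 2.-1)%:A = K * (2 * t).
    by rewrite /GRing.scale /= mulr1 expr1 mulr_natl.
  by rewrite -E.
pose g := fun t : R => p t - K * t ^+ 2.
have dg (t : R) : is_derive t (1:R) g (dotp (grad F (t *: h + xa)) h - K * (2 * t)).
  exact: is_deriveB.
have gc : {within `[0, 1], continuous g}.
  apply: continuous_subspaceT => t.
  apply: differentiable_continuous; apply/derivable1_diffP.
  by case: (dg t).
have [c cI E] := MVT ltr01 (fun t _ => dg t) gc.
have c0 : 0 < c by move: cI; rewrite in_itv /= => /andP[].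
have Hle : dotp (grad F (c *: h + xa)) h <= K * (2 * c).
  apply: le_trans (dotp_le _ _) _.
  have Hl := grad_lip (c *: h + xa) xa.
  rewrite (grad_min hxa) subr0 addrK enormZ (ger0_norm (ltW c0)) in Hl.
  have -> : K * (2 * c) = La * (c * enorm h) * enorm h.
    by rewrite /K expr2; field.
  by apply: ler_wpM2r => //; exact: enorm_ge0.
move: E; rewrite /g /p scale1r scale0r add0r subrK expr0n /= mulr0 subr0.
rewrite expr1n mulr1 subr0 mulr1 => E.
have : F x - K - F xa <= 0 by rewrite E; lra.
lra.
Qed.

End M.

Unset Implicit Arguments.

Theorem proposition4 (R : realType) (d n : nat)
  (f : 'I_n -> 'rV[R]_d -> R) (L : 'I_n -> R) (xs : 'I_n -> 'rV[R]_d)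
  (alpha : 'I_n -> R)
  (hsmooth : forall i, Lsmooth (L i) (f i))
  (hmin : forall i, is_minimizer (f i) (xs i))
  (halpha : forall i, 0 < alpha i < 1)
  (xa : 'rV[R]_d) (hxa : is_minimizer (ftilde f alpha xs) xa) :
  forall x : 'rV[R]_d,
    enorm (grad (ftilde f alpha xs) x) <= Lalpha alpha L * enorm (x - xa) /\
    ftilde f alpha xs x - ftilde f alpha xs xa
      <= Lalpha alpha L / 2 * enorm (x - xa) ^+ 2.
Proof.
move=> x; split.
  have := @grad_lip R d n f L xs alpha hsmooth halpha x xa.
  by rewrite (@grad_min R d n f L xs alpha hsmooth xa hxa) subr0.
exact: (@part2 R d n f L xs alpha hsmooth halpha xa x hxa).
Qed.
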